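(* Let $G,G'$ be simplicial groups acting on simplicial sets $X,X'$ respectively, and assume the orbit spaces $X/G$ and $X'/G'$ are discrete. Let $\varphi\colon G\to G'$ be a homomorphism of simplicial groups and $f\colon X\to X'$ a simplicial map equivariant along $\varphi$ (i.e. $f(gx)=\varphi(g)f(x)$). If $\varphi$ is a Kan fibration, then so is $f$.
   Context: The orbit space $X/G$ is the levelwise quotient of $X$ by the $G$-action; it is discrete if it is a constant simplicial set (all degeneracies from level $0$ are bijections). *)

(* Defs.v *)
From mathcomp Require Import all_boot.
Set Warnings "-notation-overridden".
Set Implicit Arguments. Unset Strict Implicit. Unset Printing Implicit Defensive.

(* Morphisms [m] -> [n] of Delta: monotone maps 'I_m.+1 -> 'I_n.+1. *)
Definition Dmap (m n : nat) :=
  {f : 'I_m.+1 -> 'I_n.+1 | forall i j : 'I_m.+1, i <= j -> f i <= f j}.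

Definition Dfun m n (f : Dmap m n) : 'I_m.+1 -> 'I_n.+1 := proj1_sig f.

Definition Did (n : nat) : Dmap n n.
Proof. by exists (fun i => i). Defined.

Definition Dcomp l m n (g : Dmap m n) (f : Dmap l m) : Dmap l n.
Proof.
exists (fun i => Dfun g (Dfun f i)).
by move=> i j hij; apply: (proj2_sig g); apply: (proj2_sig f).
Defined.

Definition coface m (i : 'I_m.+2) : Dmap m m.+1.
Proof.
exists (fun j : 'I_m.+1 => lift i j).
by move=> a b hab; rewrite /= leq_bump2.
Defined.

Definition toPoint (n : nat) : Dmap n 0.
Proof. by exists (fun _ => ord0). Defined.

Record sSet := SSet {
  sobj :> nat -> Type;
  smap : forall m n, Dmap m n -> sobj n -> sobj m;
  smap_ext : forall m n (f g : Dmap m n) x,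
      (forall i, Dfun f i = Dfun g i) -> smap f x = smap g x;
  smap_id : forall n x, smap (Did n) x = x;
  smap_comp : forall l m n (g : Dmap m n) (f : Dmap l m) x,
      smap (Dcomp g f) x = smap f (smap g x)
}.

Definition face (X : sSet) m (i : 'I_m.+2) : X m.+1 -> X m := smap (coface i).

Definition is_smap (X Y : sSet) (f : forall n, X n -> Y n) : Prop :=
  forall m n (a : Dmap m n) x, f m (smap a x) = smap a (f n x).

Record sGroup := SGroup {
  gset :> sSet;
  gmul : forall n, gset n -> gset n -> gset n;
  gone : forall n, gset n;
  ginv : forall n, gset n -> gset n;
  gmulA : forall n (x y z : gset n), gmul x (gmul y z) = gmul (gmul x y) z;
  gmul1 : forall n (x : gset n), gmul (gone n) x = x;
  gmulV : forall n (x : gset n), gmul (ginv x) x = gone n;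
  gmap_mul : forall m n (a : Dmap m n) (x y : gset n),
      smap a (gmul x y) = gmul (smap a x) (smap a y)
}.

Definition is_shom (G H : sGroup) (phi : forall n, G n -> H n) : Prop :=
  is_smap phi /\ forall n (x y : G n), phi n (gmul x y) = gmul (phi n x) (phi n y).

Record sAction (G : sGroup) (X : sSet) := SAction {
  act : forall n, G n -> X n -> X n;
  act_one : forall n (x : X n), act (gone G n) x = x;
  act_mul : forall n (g h : G n) (x : X n), act (gmul g h) x = act g (act h x);
  act_nat : forall m n (a : Dmap m n) (g : G n) (x : X n),
      smap a (act g x) = act (smap a g) (smap a x)
}.

Definition same_orbit G X (A : sAction G X) n (x y : X n) : Prop :=
  exists g : G n, act A g x = y.

(* The orbit space X/G is discrete (constant): for every n the degeneracy
   (X/G)_0 -> (X/G)_n induced by [n] -> [0] is a bijection of orbit sets. *)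
Definition orbit_discrete G X (A : sAction G X) : Prop :=
  forall n,
    (forall x : X n, exists x0 : X 0, same_orbit A (smap (toPoint n) x0) x) /\
    (forall x0 y0 : X 0,
        same_orbit A (smap (toPoint n) x0) (smap (toPoint n) y0) ->
        same_orbit A x0 y0).

(* Horns Lambda^{m+1}_k in X: families (x_i)_{i <> k} of m-simplices agreeing
   on the overlaps of the faces (values at i = k are ignored). *)
Definition is_horn (X : sSet) m (k : 'I_m.+2) (x : 'I_m.+2 -> X m) : Prop :=
  forall (i j : 'I_m.+2), i != k -> j != k ->
  forall p (a b : Dmap p m),
    (forall t, Dfun (coface i) (Dfun a t) = Dfun (coface j) (Dfun b t)) ->
    smap a (x i) = smap b (x j).

Definition Kan_fibration (X Y : sSet) (f : forall n, X n -> Y n) : Prop :=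
  forall m (k : 'I_m.+2) (x : 'I_m.+2 -> X m) (y : Y m.+1),
    is_horn k x ->
    (forall i, i != k -> face i y = f m (x i)) ->
    exists z : X m.+1, (forall i, i != k -> face i z = x i) /\ f m.+1 z = y.

(* Main.v *)
Require Import Defs.
From mathcomp Require Import all_boot zify.
Set Warnings "-notation-overridden".
Set Implicit Arguments. Unset Strict Implicit. Unset Printing Implicit Defensive.

Lemma fc_bound p j (x : 'I_p.+1) : bump j x < p.+2.
Proof. case: x => x hx /=; rewrite /bump; lia. Qed.
Definition fcf p j (x : 'I_p.+1) : 'I_p.+2 := Ordinal (fc_bound j x).
Lemma fc_mono p j (a b : 'I_p.+1) : a <= b -> fcf j a <= fcf j b.
Proof. rewrite /fcf /= /bump; lia. Qed.
Definition fc (p j : nat) : Dmap p p.+1 := exist _ (@fcf p j) (@fc_mono p j).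

Lemma dg_bound p l (x : 'I_p.+2) : minn (x - (l < x)) p < p.+1.
Proof. lia. Qed.
Definition dgf p l (x : 'I_p.+2) : 'I_p.+1 := Ordinal (dg_bound l x).
Lemma dg_mono p l (a b : 'I_p.+2) : a <= b -> dgf l a <= dgf l b.
Proof. rewrite /dgf /=; lia. Qed.
Definition dg (p l : nat) : Dmap p.+1 p := exist _ (@dgf p l) (@dg_mono p l).

Lemma vpt_bound n j : minn j n < n.+1.
Proof. lia. Qed.
Definition vptf n j (x : 'I_1) : 'I_n.+1 := Ordinal (vpt_bound n j).
Lemma vpt_mono n j (a b : 'I_1) : a <= b -> vptf n j a <= vptf n j b.
Proof. by []. Qed.
Definition vpt (n j : nat) : Dmap 0 n := exist _ (@vptf n j) (@vpt_mono n j).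

Lemma fcE p j x : (Dfun (fc p j) x : nat) = bump j x. Proof. reflexivity. Qed.
Lemma dgE p l x : (Dfun (dg p l) x : nat) = minn (x - (l < x)) p. Proof. reflexivity. Qed.
Lemma vptE n j x : (Dfun (vpt n j) x : nat) = minn j n. Proof. reflexivity. Qed.
Lemma DcompE l m n (g : Dmap m n) (f : Dmap l m) x : Dfun (Dcomp g f) x = Dfun g (Dfun f x).
Proof. reflexivity. Qed.

Lemma smapP (X : sSet) m n (f g : Dmap m n) (x : X n) :
  (forall i, (Dfun f i : nat) = Dfun g i) -> smap f x = smap g x.
Proof. by move=> h; apply: smap_ext => i; apply: val_inj; apply: h. Qed.

Lemma smap_id' (X : sSet) n (f : Dmap n n) (x : X n) :
  (forall i, (Dfun f i : nat) = i) -> smap f x = x.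
Proof. by move=> h; rewrite -[RHS](smap_id (s:=X)); apply: smapP. Qed.


Lemma mulgV' (G : sGroup) n (x : G n) : gmul x (ginv x) = gone G n.
Proof.
rewrite -[LHS]gmul1 -{1}(gmulV (ginv x)) -gmulA (gmulA (ginv x) x) gmulV gmul1.
by rewrite gmulV.
Qed.

Lemma mulg1' (G : sGroup) n (x : G n) : gmul x (gone G n) = x.
Proof. by rewrite -(gmulV x) gmulA mulgV' gmul1. Qed.

Lemma linv_uniq (G : sGroup) n (y z : G n) : gmul y z = gone G n -> y = ginv z.
Proof. by move=> h; rewrite -(mulg1' y) -(mulgV' z) gmulA h gmul1. Qed.

Lemma smap1 (G : sGroup) m n (a : Dmap m n) : smap a (gone G n) = gone G m.
Proof.
set s := smap a _.
have hs : gmul s s = s by rewrite /s -gmap_mul gmul1.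
transitivity (gmul (ginv s) (gmul s s)); first by rewrite gmulA gmulV gmul1.
by rewrite hs gmulV.
Qed.

Lemma smapVg (G : sGroup) m n (a : Dmap m n) (x : G n) :
  smap a (ginv x) = ginv (smap a x).
Proof. by apply: linv_uniq; rewrite -gmap_mul gmulV smap1. Qed.

Lemma actV (G : sGroup) (X : sSet) (A : sAction G X) n (g : G n) x :
  act A (ginv g) (act A g x) = x.
Proof. by rewrite -act_mul gmulV act_one. Qed.

Lemma actVr (G : sGroup) (X : sSet) (A : sAction G X) n (g : G n) x :
  act A g (act A (ginv g) x) = x.
Proof. by rewrite -act_mul mulgV' act_one. Qed.

Lemma factor (X : sSet) p (j : nat) l (h : Dmap l p.+1) (x : X p.+1) :
  j <= p.+1 -> (forall t, (Dfun h t : nat) != j) ->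
  exists h' : Dmap l p, smap h x = smap h' (smap (fc p j) x).
Proof.
move=> hj hmiss.
have hb : forall t, minn (unbump j (Dfun h t)) p < p.+1 by move=> t; lia.
have hm : forall a b : 'I_l.+1, a <= b -> Ordinal (hb a) <= Ordinal (hb b).
  move=> a b hab /=; have := proj2_sig h a b hab; rewrite /unbump /Dfun; lia.
exists (exist _ _ hm).
rewrite -smap_comp; apply: smapP => t.
rewrite DcompE fcE /=; have := hmiss t; have := ltn_ord (Dfun h t); rewrite /bump /unbump; lia.
Qed.

Lemma ginv1 (G : sGroup) n : ginv (gone G n) = gone G n.
Proof. by rewrite -[LHS]mulg1' gmulV. Qed.

Definition Sv (X : sSet) n (v : X 0) : X n := smap (toPoint n) v.

Lemma Sv_smap (X : sSet) m n (a : Dmap m n) (v : X 0) : smap a (Sv n v) = Sv m v.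
Proof. by rewrite /Sv -smap_comp; apply: smapP => t; rewrite DcompE. Qed.

Lemma smap0 (X : sSet) (e : Dmap 0 0) (x : X 0) : smap e x = x.
Proof. apply: smap_id' => i; have := ltn_ord (Dfun e i); have := ltn_ord i; lia. Qed.

Lemma vertexL (G : sGroup) (X : sSet) (A : sAction G X) (Hd : orbit_discrete A)
  n (e : Dmap 0 n) (x : X n) : exists g : G n, x = act A g (Sv n (smap e x)).
Proof.
have [h1 _] := Hd n; case: (h1 x) => x0 [g hg].
have ex : smap e x = act A (smap e g) x0.
  by rewrite -hg act_nat -smap_comp smap0.
exists (gmul g (ginv (Sv n (smap e g)))).
by rewrite ex /Sv act_nat -act_mul -gmulA gmulV mulg1' hg.
Qed.

Lemma correct (G : sGroup) (X : sSet) (A : sAction G X) (Hd : orbit_discrete A)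
  p (i l : nat) (a : X p.+1) (t : G p.+1) :
  (forall x : 'I_p.+1, (Dfun (dg p l) (Dfun (fc p i) x) : nat) = x) ->
  act A (smap (fc p i) t) (smap (fc p i) a) = smap (fc p i) a ->
  exists u : G p.+1, act A u a = a /\ smap (fc p i) u = ginv (smap (fc p i) t) /\
   forall j j', j' <= p.+1 ->
   (forall x : 'I_p.+1, (Dfun (fc p i) (Dfun (dg p l) (Dfun (fc p j) x)) : nat) != j') ->
   smap (fc p j') t = gone G p -> smap (fc p j) u = gone G p.
Proof.
move=> hid hfix.
have [g hg] := vertexL Hd (vpt p.+1 0) a.
move: hg; set v := smap (vpt _ 0) a => hg.
pose g' := smap (fc p i) g; pose e := smap (fc p i) t.
pose c := gmul (ginv g') (gmul (ginv e) g').
have hFa : smap (fc p i) a = act A g' (Sv p v) by rewrite {1}hg act_nat Sv_smap.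
exists (gmul g (gmul (smap (dg p l) c) (ginv g))).
split.
  have hc : act A c (Sv p v) = Sv p v.
    rewrite /c !act_mul -hFa -{1}hfix actV hFa actV //.
  rewrite hg !act_mul actV; congr (act A g _).
  by rewrite -(Sv_smap (dg p l) v) -act_nat hc.
split.
  have hDc : smap (fc p i) (smap (dg p l) c) = c by rewrite -smap_comp smap_id'.
  rewrite (gmap_mul (fc p i) g) (gmap_mul (fc p i) (smap (dg p l) c)) hDc smapVg -/g'.
  by rewrite /c !gmulA mulgV' gmul1 -gmulA mulgV' mulg1'.
move=> j j' hj' hmiss ht.
have hE : smap (Dcomp (dg p l) (fc p j)) e = gone G p.
  rewrite /e -smap_comp; have [h' ->] := factor (h := Dcomp (fc p i) (Dcomp (dg p l) (fc p j))) t hj' hmiss.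
  by rewrite ht smap1.
rewrite !gmap_mul !smapVg -smap_comp. rewrite -(smap_comp (dg p l) (fc p j)) hE ginv1 gmul1 gmulV gmul1 mulgV' //.
Qed.

Lemma RT_asc (G : sGroup) (X : sSet) (A : sAction G X) (Hd : orbit_discrete A)
  p i (a b : X p.+1) :
  same_orbit A a b -> i <= p.+1 ->
  (forall j, j < i -> smap (fc p j) a = smap (fc p j) b) ->
  exists t : G p.+1, act A t a = b /\ forall j, j < i -> smap (fc p j) t = gone G p.
Proof.
move=> hab; elim: i => [|i IH] hi hf.
  by case: hab => t ht; exists t.
have [t [ht htf]] := IH (ltnW hi) (fun j hj => hf j (leqW hj)).
have hfix : act A (smap (fc p i) t) (smap (fc p i) a) = smap (fc p i) a.
  by rewrite -act_nat ht hf.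
have hid : forall x : 'I_p.+1, (Dfun (dg p i) (Dfun (fc p i) x) : nat) = x.
  by move=> x; rewrite dgE fcE; have := ltn_ord x; rewrite /bump; lia.
have [u [hu [hui huj]]] := correct Hd hid hfix.
exists (gmul t u); split; first by rewrite act_mul hu.
move=> j hj; rewrite gmap_mul.
have [hji|hji] := ltnP j i.
  rewrite htf // (huj j j _ _ (htf j hji)) ?gmul1 //; first lia.
  by move=> x; rewrite fcE dgE fcE; have := ltn_ord x; rewrite /bump; lia.
have -> : j = i by lia.
by rewrite hui mulgV'.
Qed.

Lemma RT_desc (G : sGroup) (X : sSet) (A : sAction G X) (Hd : orbit_discrete A)
  p q : forall n i (a b : X p.+1), p.+2 - i <= n ->
  same_orbit A a b -> q < i -> i <= p.+2 ->
  (forall j, j < q -> smap (fc p j) a = smap (fc p j) b) ->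
  (forall j, i <= j <= p.+1 -> smap (fc p j) a = smap (fc p j) b) ->
  exists t : G p.+1, act A t a = b /\ (forall j, j < q -> smap (fc p j) t = gone G p)
     /\ (forall j, i <= j <= p.+1 -> smap (fc p j) t = gone G p).
Proof.
elim => [|n IH] i a b hn hab hqi hip hlo hhi.
  have hq : q <= p.+1 by lia.
  have [t [ht htf]] := RT_asc Hd hab hq hlo.
  exists t; split=> //; split=> // j hj; exfalso; lia.
have [hle|hgt] := leqP (p.+2 - i) n; first exact: IH.
have h1 : p.+2 - i.+1 <= n by lia.
have h2 : q < i.+1 by lia.
have h3 : i.+1 <= p.+2 by lia.
have h4 : forall j, i.+1 <= j <= p.+1 -> smap (fc p j) a = smap (fc p j) b.
  by move=> j hj; apply: hhi; lia.
have [t [ht [htl hth]]] := IH i.+1 a b h1 hab h2 h3 hlo h4.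
have hi' : i <= i <= p.+1 by lia.
have hfix : act A (smap (fc p i) t) (smap (fc p i) a) = smap (fc p i) a.
  by rewrite -act_nat ht (hhi i hi').
have hid : forall x : 'I_p.+1, (Dfun (dg p i.-1) (Dfun (fc p i) x) : nat) = x.
  by move=> x; rewrite dgE fcE; have := ltn_ord x; rewrite /bump; lia.
have [u [hu [hui huj]]] := correct Hd hid hfix.
exists (gmul t u); split; first by rewrite act_mul hu.
split.
  move=> j hj; rewrite gmap_mul htl // (huj j j _ _ (htl j hj)) ?gmul1 //; first lia.
  by move=> x; rewrite fcE dgE fcE; have := ltn_ord x; rewrite /bump; lia.
move=> j hj; rewrite gmap_mul.
have [hji|hji] := eqVneq j i.
  by rewrite hji hui mulgV'.
have hj2 : i.+1 <= j <= p.+1 by lia.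
rewrite hth // (huj j j _ _ (hth j hj2)) ?gmul1 //; first lia.
by move=> x; rewrite fcE dgE fcE; have := ltn_ord x; rewrite /bump; lia.
Qed.

Lemma fface1 (X : sSet) p i j (w : X p.+2) : j < i ->
  smap (fc p j) (smap (fc p.+1 i) w) = smap (fc p i.-1) (smap (fc p.+1 j) w).
Proof.
move=> hji; rewrite -!smap_comp; apply: smapP => x; rewrite !DcompE !fcE.
rewrite /bump; lia.
Qed.

Lemma fface2 (X : sSet) p i j (w : X p.+2) : i <= j ->
  smap (fc p j) (smap (fc p.+1 i) w) = smap (fc p i) (smap (fc p.+1 j.+1) w).
Proof.
move=> hji; rewrite -!smap_comp; apply: smapP => x; rewrite !DcompE !fcE.
rewrite /bump; lia.
Qed.

Lemma face_fc (X : sSet) m (i : 'I_m.+2) (y : X m.+1) : face i y = smap (fc m i) y.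
Proof. by apply: smapP. Qed.

Lemma act1 (G : sGroup) (X : sSet) (A : sAction G X) n (g : G n) x :
  g = gone G n -> act A g x = x.
Proof. by move=> ->; rewrite act_one. Qed.

Lemma fill_horn (G : sGroup) (X : sSet) (A : sAction G X) (Hd : orbit_discrete A)
  p (k : 'I_p.+3) (x : 'I_p.+3 -> X p.+1) :
  is_horn k x -> exists w : X p.+2, forall i, i != k -> face i w = x i.
Proof.
move=> Hh.
pose xs (j : nat) := x (inord j).
have hk := ltn_ord k.
have hhorn : forall i j, j < i -> i <= p.+2 -> i != k -> j != k ->
    smap (fc p j) (xs i) = smap (fc p i.-1) (xs j).
  move=> i j hji hip hik hjk.
  have ei : (inord i : 'I_p.+3) = i :> nat by rewrite inordK //; lia.
  have ej : (inord j : 'I_p.+3) = j :> nat by rewrite inordK //; lia.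
  apply: Hh.
  - by apply/negP => /eqP e; move: hik; rewrite -ei e eqxx.
  - by apply/negP => /eqP e; move: hjk; rewrite -ej e eqxx.
  move=> t; apply: val_inj; rewrite /= ei ej /bump; lia.
pose i0 : nat := if k == 0 :> nat then 1 else 0.
have hi0 : i0 != k by rewrite /i0; case: ifP => /eqP; lia.
have hi0b : i0 <= 1 by rewrite /i0; case: ifP.
pose v := smap (vpt p.+1 (k - (i0 < k))) (xs i0).
have hv : forall i, i <= p.+2 -> i != k -> exists g, xs i = act A g (Sv p.+1 v).
  move=> i hip hik.
  have [g hg] := vertexL Hd (vpt p.+1 (k - (i < k))) (xs i).
  exists g; rewrite hg; congr (act A g (Sv _ _)).
  have ei : (inord i : 'I_p.+3) = i :> nat by rewrite inordK //; lia.
  have ej : (inord i0 : 'I_p.+3) = i0 :> nat by rewrite inordK // /i0; case: ifP; lia.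
  apply: Hh.
  - by apply/negP => /eqP e; move: hik; rewrite -ei e eqxx.
  - by apply/negP => /eqP e; move: hi0; rewrite -ej e eqxx.
  move=> t; apply: val_inj; rewrite /= ei ej /bump; lia.
have horb : forall i (g : G p.+2), i <= p.+2 -> i != k ->
    same_orbit A (smap (fc p.+1 i) (act A g (Sv p.+2 v))) (xs i).
  move=> i g hip hik; have [gi hgi] := hv i hip hik.
  exists (gmul gi (ginv (smap (fc p.+1 i) g))).
  by rewrite act_nat Sv_smap act_mul actV hgi.
have asc : forall i, i <= k -> exists g : G p.+2,
    forall j, j < i -> smap (fc p.+1 j) (act A g (Sv p.+2 v)) = xs j.
  elim => [|i IH] hik; first by exists (gone G p.+2).
  have [g hg] := IH (ltnW hik).
  have hik' : i != k by lia.
  have hip : i <= p.+2 by lia.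
  have hab := horb i g hip hik'.
  have hip1 : i <= p.+1 by lia.
  have hcond : forall j, j < i -> smap (fc p j) (smap (fc p.+1 i) (act A g (Sv p.+2 v)))
      = smap (fc p j) (xs i).
    move=> j hj; have hjk : j != k by lia.
    by rewrite fface1 // (hg j hj) (hhorn i j hj hip hik' hjk).
  have [t [ht htf]] := RT_asc Hd hab hip1 hcond.
  exists (gmul (smap (dg p.+1 i) t) g) => j hj.
  rewrite act_mul act_nat.
  have [hji|hji] := ltnP j i.
    rewrite act1; first by rewrite hg.
    rewrite -smap_comp.
    have hmiss : forall y, (Dfun (Dcomp (dg p.+1 i) (fc p.+1 j)) y : nat) != j.
      move=> y; rewrite DcompE dgE fcE; have := ltn_ord y; rewrite /bump; lia.
    have hj1 : j <= p.+1 by lia.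
    have [h' ->] := factor t hj1 hmiss.
    by rewrite htf // smap1.
  have -> : j = i by lia.
  rewrite -smap_comp smap_id' ?ht //.
  move=> y; rewrite DcompE dgE fcE; have := ltn_ord y; rewrite /bump; lia.
have desc : forall n i, p.+3 - i <= n -> k < i -> i <= p.+3 -> exists g : G p.+2,
    (forall j, j < k -> smap (fc p.+1 j) (act A g (Sv p.+2 v)) = xs j) /\
    (forall j, i <= j <= p.+2 -> smap (fc p.+1 j) (act A g (Sv p.+2 v)) = xs j).
  elim => [|n IH] i hn hki hip.
    have [g hg] := asc k (leqnn k).
    by exists g; split => // j hj; exfalso; lia.
  have [hle|hgt] := leqP (p.+3 - i) n; first exact: IH.
  have h1 : p.+3 - i.+1 <= n by lia.
  have h2 : k < i.+1 by lia.
  have h3 : i.+1 <= p.+3 by lia.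
  have [g [hgl hgh]] := IH i.+1 h1 h2 h3.
  have hik : i != k by lia.
  have hip2 : i <= p.+2 by lia.
  have hab := horb i g hip2 hik.
  have hlo : forall j, j < k -> smap (fc p j) (smap (fc p.+1 i) (act A g (Sv p.+2 v)))
      = smap (fc p j) (xs i).
    move=> j hj; have hjk : j != k by lia.
    have hji : j < i by lia.
    by rewrite fface1 // (hgl j hj) (hhorn i j hji hip2 hik hjk).
  have hhi : forall j, i <= j <= p.+1 -> smap (fc p j) (smap (fc p.+1 i) (act A g (Sv p.+2 v)))
      = smap (fc p j) (xs i).
    move=> j hj; have hj1 : i.+1 <= j.+1 <= p.+2 by lia.
    have hij : i < j.+1 by lia.
    have hjk : j.+1 != k by lia.
    have hj2 : j.+1 <= p.+2 by lia.
    have hij' : i <= j by lia.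
    by rewrite fface2 // (hgh j.+1 hj1) (hhorn j.+1 i hij hj2 hjk hik).
  have [t [ht [htl hth]]] :=
    @RT_desc _ _ _ Hd p k (p.+2 - i) i _ _ (leqnn _) hab hki hip2 hlo hhi.
  exists (gmul (smap (dg p.+1 i.-1) t) g); split.
    move=> j hj; rewrite act_mul act_nat act1; first by rewrite hgl.
    rewrite -smap_comp.
    have hmiss : forall y, (Dfun (Dcomp (dg p.+1 i.-1) (fc p.+1 j)) y : nat) != j.
      move=> y; rewrite DcompE dgE fcE; have := ltn_ord y; rewrite /bump; lia.
    have hj1 : j <= p.+1 by lia.
    have [h' ->] := factor t hj1 hmiss.
    by rewrite htl // smap1.
  move=> j hj; rewrite act_mul act_nat.
  have [hji|hji] := eqVneq j i.
    rewrite hji -smap_comp smap_id' ?ht //.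
    move=> y; rewrite DcompE dgE fcE; have := ltn_ord y; rewrite /bump; lia.
  rewrite act1; first by rewrite hgh //; lia.
  rewrite -smap_comp.
  have hmiss : forall y, (Dfun (Dcomp (dg p.+1 i.-1) (fc p.+1 j)) y : nat) != j.-1.
    move=> y; rewrite DcompE dgE fcE; have := ltn_ord y; rewrite /bump; lia.
  have hj1 : j.-1 <= p.+1 by lia.
  have [h' ->] := factor t hj1 hmiss.
  by rewrite hth ?smap1 //; lia.
have [g [hgl hgh]] := desc (p.+3 - k.+1) k.+1 (leqnn _) (ltnSn k) hk.
exists (act A g (Sv p.+2 v)) => i hik; rewrite face_fc.
have -> : x i = xs i by rewrite /xs inord_val.
have := ltn_ord i.
case: (ltngtP i k) => hc hi.
- exact: hgl.
- by apply: hgh; lia.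
- by move: hik; rewrite (val_inj hc) eqxx.
Qed.

Theorem proposition4p4 (G G' : sGroup) (X X' : sSet)
  (A : sAction G X) (A' : sAction G' X')
  (phi : forall n, G n -> G' n) (f : forall n, X n -> X' n) :
  orbit_discrete A -> orbit_discrete A' ->
  is_shom phi -> is_smap f ->
  (forall n (g : G n) (x : X n), f n (act A g x) = act A' (phi n g) (f n x)) ->
  Kan_fibration phi -> Kan_fibration f.
Proof.
move=> HdX HdX' Hphi Hf Heq Hkan m k x y Hh Hy.
have hk := ltn_ord k.
have [w hw] : exists w : X m.+1, forall i, i != k -> face i w = x i.
  move: k x Hh {Hy hk}; case: m {y} => [|p] k x Hh; last first; first exact: (fill_horn HdX Hh).
  pose i0 : 'I_2 := inord (1 - k).
  exists (smap (toPoint 1) (x i0)) => i hik.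
  have -> : i = i0.
    apply: val_inj; rewrite /i0 /= inordK; last lia.
    have := ltn_ord i; have := ltn_ord k; move: hik.
    rewrite -(inj_eq val_inj) /=; lia.
  rewrite /face -smap_comp. exact: (smap0 (X:=X)). 
have hfaces : forall j, j <= m.+1 -> j != k ->
    smap (fc m j) (f m.+1 w) = smap (fc m j) y.
  move=> j hj hjk.
  have ej : (inord j : 'I_m.+2) = j :> nat by rewrite inordK.
  have hne : (inord j : 'I_m.+2) != k.
    by apply/negP => /eqP e; move: hjk; rewrite -ej e eqxx.
  rewrite -Hf.
  have e1 : smap (fc m j) w = face (inord j) w by rewrite face_fc ej.
  have e2 : smap (fc m j) y = face (inord j) y by rewrite face_fc ej.
  by rewrite e1 e2 hw // Hy.
pose j0 : nat := if k == 0 :> nat then 1 else 0.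
have hj0 : j0 != k by rewrite /j0; case: ifP => /eqP; lia.
have hj0b : j0 <= m.+1 by rewrite /j0; case: ifP.
have hab : same_orbit A' (f m.+1 w) y.
  have [g1 hg1] := vertexL HdX' (Dcomp (fc m j0) (vpt m 0)) (f m.+1 w).
  have [g2 hg2] := vertexL HdX' (Dcomp (fc m j0) (vpt m 0)) y.
  move: hg1 hg2; rewrite !smap_comp (hfaces j0 hj0b hj0) => hg1 hg2.
  exists (gmul g2 (ginv g1)).
  by rewrite act_mul hg1 actV -hg2.
have hlo : forall j, j < k -> smap (fc m j) (f m.+1 w) = smap (fc m j) y.
  by move=> j hj; apply: hfaces; lia.
have hhi : forall j, k.+1 <= j <= m.+1 -> smap (fc m j) (f m.+1 w) = smap (fc m j) y.
  by move=> j hj; apply: hfaces; lia.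
have hkm : k.+1 <= m.+2 by [].
have [t' [ht' [htl hth]]] :=
  @RT_desc _ _ _ HdX' m k (m.+2 - k.+1) k.+1 _ _ (leqnn _) hab (ltnSn k) hkm hlo hhi.
have hphi1 : forall n, phi n (gone G n) = gone G' n.
  move=> n; have h := Hphi.2 n (gone G n) (gone G n); rewrite gmul1 in h.
  set s := phi n (gone G n) in h *.
  transitivity (gmul (ginv s) (gmul s s)); first by rewrite gmulA gmulV gmul1.
  by rewrite -h gmulV.
have hhorn : is_horn k (fun _ : 'I_m.+2 => gone G m).
  by move=> i j _ _ q a b _; rewrite !smap1.
have hface : forall i, i != k -> face i t' = phi m ((fun _ : 'I_m.+2 => gone G m) i).
  move=> i hik; rewrite hphi1 face_fc.
  have := ltn_ord i; move: hik; rewrite -(inj_eq val_inj) /= => hik hi.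
  case: (ltngtP i k) => hc.
  - exact: htl.
  - by apply: hth; lia.
  - by move: hik; rewrite hc eqxx.
have [tt [htt hphit]] := Hkan m k _ t' hhorn hface.
exists (act A tt w); split.
  move=> i hik; rewrite /face act_nat.
  by rewrite -/(face i tt) -/(face i w) htt // hw // act_one.
by rewrite Heq hphit.
Qed.
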